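(* There exist an environment $E$ and a total preorder $\succeq$ on $\Pi^E$ such that $\succeq\in\mathrm{Ord}_{\mathrm{RRL}}(E)$ but $\succeq\notin\mathrm{Ord}_{\mathrm{ONMR}}(E)$.
   Context: An environment is a tuple $E=(\mathcal S,\mathcal A,\mathcal T,\mathcal I)$ where $\mathcal S,\mathcal A$ are finite nonempty sets, $\mathcal T:\mathcal S\times\mathcal A\to\Delta(\mathcal S)$ and $\mathcal I\in\Delta(\mathcal S)$. A policy is a map $\pi:\mathcal S\to\Delta(\mathcal A)$ (stationary, possibly stochastic); $\Pi^E$ denotes the set of all policies. A trajectory $\xi=(s_0,a_0,s_1,a_1,\dots)$ is generated under $\pi$ by $s_0\sim\mathcal I$, $a_t\sim\pi(s_t)$, $s_{t+1}\sim\mathcal T(s_t,a_t)$; $\mathbb E^\pi_\xi$ denotes expectation under this distribution. An objective-specification formalism $X$ assigns to each environment $E$ a set of objective specifications, each inducing a total preorder $\succeq$ on $\Pi^E$; $\mathrm{Ord}_X(E)$ is the set of total preorders so induced. A specification defining a scalar $J:\Pi^E\to\mathbb R$ induces $\pi_1\succeq\pi_2\iff J(\pi_1)\ge J(\pi_2)$. RRL: specification $(\mathcal R,\alpha,F,\gamma)$ with $\mathcal R:\mathcal S\times\mathcal A\times\mathcal S\to\mathbb R$, $\alpha\in\mathbb R$, $F:\Delta(\mathcal A)\to\mathbb R$, $\gamma\in[0,1)$; $J(\pi)=\mathbb E^\pi_\xi[\sum_{t=0}^\infty\gamma^t(\mathcal R(s_t,a_t,s_{t+1})-\alpha F(\pi(s_t)))]$.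 ONMR: specification $(\mathcal R,f,\gamma)$ with $\mathcal R:\mathcal S\times\mathcal A\times\mathcal S\to\mathbb R$, $f:\mathbb R\to\mathbb R$, $\gamma\in[0,1)$; $J(\pi)=f\big(\mathbb E^\pi_\xi[\sum_{t=0}^\infty\gamma^t\mathcal R(s_t,a_t,s_{t+1})]\big)$. *)

(* Defs.v *)
From mathcomp Require Import all_boot all_order all_algebra.
From mathcomp Require Import all_classical all_reals all_analysis.
Set Implicit Arguments. Unset Strict Implicit. Unset Printing Implicit Defensive.
Import Order.TTheory GRing.Theory Num.Theory.
Local Open Scope ring_scope.

Section Defs.
Variable R : realType.

Record dist (X : finType) := Dist {
  dfun :> {ffun X -> R};
  dist_ge0 : forall x, 0 <= dfun x;
  dist_sum1 : \sum_(x : X) dfun x = 1 }.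

Record env := Env {
  St : finType;
  Ac : finType;
  St_nonempty : (0 < #|St|)%N;
  Ac_nonempty : (0 < #|Ac|)%N;
  Tr : St -> Ac -> dist St;
  Init : dist St }.

Definition policy (E : env) := St E -> dist (Ac E).

Fixpoint occ (E : env) (pi : policy E) (t : nat) : St E -> R :=
  match t with
  | O => fun s => Init E s
  | t'.+1 => fun s' => \sum_(s : St E) \sum_(a : Ac E)
                occ pi t' s * pi s a * Tr s a s'
  end.

Definition exp_reward (E : env) (Rw : St E -> Ac E -> St E -> R)
  (pi : policy E) (t : nat) : R :=
  \sum_(s : St E) \sum_(a : Ac E) \sum_(s' : St E)
     occ pi t s * pi s a * Tr s a s' * Rw s a s'.

Definition exp_reg (E : env) (F : dist (Ac E) -> R) (pi : policy E) (t : nat) : R :=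
  \sum_(s : St E) occ pi t s * F (pi s).

(* Infinite sums are limits of partial sums (limn); they converge since
   gamma < 1 and all terms are bounded. *)
Definition J_RRL (E : env) (Rw : St E -> Ac E -> St E -> R) (alpha : R)
  (F : dist (Ac E) -> R) (gamma : R) (pi : policy E) : R :=
  limn (fun n => \sum_(0 <= t < n) gamma ^+ t * (exp_reward Rw pi t - alpha * exp_reg F pi t)).

Definition J_ONMR (E : env) (Rw : St E -> Ac E -> St E -> R) (f : R -> R)
  (gamma : R) (pi : policy E) : R :=
  f (limn (fun n => \sum_(0 <= t < n) gamma ^+ t * exp_reward Rw pi t)).

Definition induced_by (E : env) (J : policy E -> R)
  (ord : policy E -> policy E -> Prop) : Prop :=
  forall p1 p2, ord p1 p2 <-> J p2 <= J p1.

Definition total_preorder (E : env) (ord : policy E -> policy E -> Prop) : Prop :=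
  (forall p, ord p p) /\
  (forall p q r, ord p q -> ord q r -> ord p r) /\
  (forall p q, ord p q \/ ord q p).

Definition in_Ord_RRL (E : env) (ord : policy E -> policy E -> Prop) : Prop :=
  exists (Rw : St E -> Ac E -> St E -> R) (alpha : R) (F : dist (Ac E) -> R) (gamma : R),
    0 <= gamma < 1 /\ induced_by (J_RRL Rw alpha F gamma) ord.

Definition in_Ord_ONMR (E : env) (ord : policy E -> policy E -> Prop) : Prop :=
  exists (Rw : St E -> Ac E -> St E -> R) (f : R -> R) (gamma : R),
    0 <= gamma < 1 /\ induced_by (J_ONMR Rw f gamma) ord.

End Defs.

(* Main.v *)
Require Import Defs.
From mathcomp Require Import all_boot all_order all_algebra.
From mathcomp Require Import all_classical all_reals all_analysis.
From mathcomp Require Import ring lra.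
Import Order.TTheory GRing.Theory Num.Theory.
Local Open Scope ring_scope.
Set Implicit Arguments. Unset Strict Implicit.

Section Aux.
Variable R : realType.

Lemma sum_unit (F : unit -> R) : \sum_(s : unit) F s = F tt.
Proof. by rewrite (big_pred1 tt) // => -[]. Qed.

Lemma sum_I3 (F : 'I_3 -> R) :
  \sum_(i < 3) F i = F (inord 0) + F (inord 1) + F (inord 2).
Proof.
rewrite !big_ord_recl big_ord0 addr0 addrA.
congr (F _ + F _ + F _); apply: val_inj => /=; rewrite inordK //.
Qed.

Definition f3 (x0 x1 x2 : R) : {ffun 'I_3 -> R} :=
  [ffun i : 'I_3 => [:: x0; x1; x2]`_i].

Lemma f3E0 x0 x1 x2 : f3 x0 x1 x2 (inord 0) = x0.
Proof. by rewrite ffunE inordK. Qed.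
Lemma f3E1 x0 x1 x2 : f3 x0 x1 x2 (inord 1) = x1.
Proof. by rewrite ffunE inordK. Qed.
Lemma f3E2 x0 x1 x2 : f3 x0 x1 x2 (inord 2) = x2.
Proof. by rewrite ffunE inordK. Qed.

Lemma f3_ge0 x0 x1 x2 : 0 <= x0 -> 0 <= x1 -> 0 <= x2 ->
  forall i, 0 <= f3 x0 x1 x2 i.
Proof.
move=> h0 h1 h2 i; rewrite ffunE.
case: i => [[|[|[|k]]] Hk] //=.
Qed.

Lemma f3_sum x0 x1 x2 : x0 + x1 + x2 = 1 -> \sum_i f3 x0 x1 x2 i = 1.
Proof. by move=> h; rewrite sum_I3 f3E0 f3E1 f3E2. Qed.

Definition mk3 (x0 x1 x2 : R) (h0 : 0 <= x0) (h1 : 0 <= x1) (h2 : 0 <= x2)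
  (hs : x0 + x1 + x2 = 1) : dist R 'I_3 :=
  @Dist R _ (f3 x0 x1 x2) (@f3_ge0 x0 x1 x2 h0 h1 h2) (@f3_sum x0 x1 x2 hs).

End Aux.

Section Main.
Variable R : realType.

Definition u1f : {ffun unit -> R} := [ffun _ => 1].
Lemma u1_ge0 x : 0 <= u1f x. Proof. by rewrite ffunE. Qed.
Lemma u1_sum : \sum_x u1f x = 1. Proof. by rewrite sum_unit ffunE. Qed.
Definition d1 : dist R unit := @Dist R _ u1f u1_ge0 u1_sum.

Lemma card_unit_gt0 : (0 < #|{: unit}|)%N. Proof. by rewrite card_unit. Qed.
Lemma card_I3_gt0 : (0 < #|{: 'I_3}|)%N. Proof. by rewrite card_ord. Qed.

Definition E0 : env R :=
  @Env R unit 'I_3 card_unit_gt0 card_I3_gt0 (fun _ _ => d1) d1.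

Lemma occ1 (pi : policy E0) t s : occ pi t s = 1.
Proof.
case: s; elim: t => [|t IH] /=; first by rewrite ffunE.
rewrite sum_unit IH; transitivity (\sum_a pi tt a); last exact: dist_sum1.
by apply: eq_bigr => a _; rewrite ffunE mul1r mulr1.
Qed.

Definition Lr (Rw : unit -> 'I_3 -> unit -> R) (d : dist R 'I_3) :=
  \sum_a d a * Rw tt a tt.

Lemma exp_rewardE Rw (pi : policy E0) t : exp_reward Rw pi t = Lr Rw (pi tt).
Proof.
rewrite /exp_reward sum_unit /Lr; apply: eq_bigr => a _.
by rewrite sum_unit occ1 ffunE mul1r mulr1.
Qed.

Definition Q (d : dist R 'I_3) := \sum_a d a ^+ 2.

Lemma J_RRLE (pi : policy E0) :
  @J_RRL R E0 (fun _ _ _ => 0) 1 Q 0 pi = - Q (pi tt).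
Proof.
rewrite /J_RRL; apply: norm_lim_near_cst.
near=> n.
have Hn : (0 < n)%N by near: n; exact: nbhs_infty_gt.
rewrite -[n](prednK Hn) big_nat_recl // expr0 mul1r.
rewrite big1_seq ?addr0; last first.
  by move=> i _; rewrite exprS !mul0r.
rewrite exp_rewardE /Lr big1; last by move=> a _; rewrite mulr0.
by rewrite /exp_reg sum_unit occ1 !mul1r sub0r.
Unshelve. all: end_near.
Qed.


Definition ordQ (p1 p2 : policy E0) : Prop := Q (p1 tt) <= Q (p2 tt).

Lemma ONMR_eq Rw f g (p1 p2 : policy E0) :
  Lr Rw (p1 tt) = Lr Rw (p2 tt) -> @J_ONMR R E0 Rw f g p1 = @J_ONMR R E0 Rw f g p2.
Proof.
move=> h; rewrite /J_ONMR.
have -> : (fun n => \sum_(0 <= t < n) g ^+ t * @exp_reward R E0 Rw p1 t) =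
          (fun n => \sum_(0 <= t < n) g ^+ t * @exp_reward R E0 Rw p2 t) ; last by [].
by apply: funext => n; apply: eq_bigr => t _; rewrite !exp_rewardE h.
Qed.

Lemma Lr_mk3 Rw x0 x1 x2 h0 h1 h2 hs :
  Lr Rw (@mk3 R x0 x1 x2 h0 h1 h2 hs) =
  x0 * Rw tt (inord 0) tt + x1 * Rw tt (inord 1) tt + x2 * Rw tt (inord 2) tt.
Proof. by rewrite /Lr sum_I3 /= f3E0 f3E1 f3E2. Qed.

Lemma Q_mk3 x0 x1 x2 h0 h1 h2 hs :
  Q (@mk3 R x0 x1 x2 h0 h1 h2 hs) = x0 ^+ 2 + x1 ^+ 2 + x2 ^+ 2.
Proof. by rewrite /Q sum_I3 /= f3E0 f3E1 f3E2. Qed.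

Lemma exists_d (r0 r1 r2 : R) : exists (x0 x1 x2 : R) (h0 : 0 <= x0) (h1 : 0 <= x1)
  (h2 : 0 <= x2) (hs : x0 + x1 + x2 = 1),
  x0 * r0 + x1 * r1 + x2 * r2 = (r0 + r1 + r2) / 3 /\
  1 / 3 < x0 ^+ 2 + x1 ^+ 2 + x2 ^+ 2.
Proof.
pose v0 := r1 - r2; pose v1 := r2 - r0; pose v2 := r0 - r1.
pose S := v0 ^+ 2 + v1 ^+ 2 + v2 ^+ 2.
have S0 : 0 <= S by rewrite /S; nra.
have [SE|Sn] := eqVneq S 0.
  have q0 := sqr_ge0 v0; have q1 := sqr_ge0 v1; have q2 := sqr_ge0 v2.
  have : v2 ^+ 2 = 0 by move: SE; rewrite /S => SE; lra.
  move/eqP; rewrite sqrf_eq0 subr_eq0 => /eqP e1.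
  have : v1 ^+ 2 = 0 by move: SE; rewrite /S => SE; lra.
  move/eqP; rewrite sqrf_eq0 subr_eq0 => /eqP e2.
  rewrite -e1 e2.
  have hz : (0:R) <= 0 by [].
  have ho : (0:R) <= 1 by [].
  have hs : (1 + 0 + 0 : R) = 1 by rewrite !addr0.
  exists 1, 0, 0, ho, hz, hz, hs; split.
    by field.
  by rewrite expr1n expr0n /= !addr0; lra.
have Sp : 0 < S by rewrite lt_def Sn S0.
pose e := (3 * (1 + S))^-1.
have ep : 0 < e by rewrite invr_gt0; lra.
have ee : e * (3 * (1 + S)) = 1 by rewrite mulVf //; lra.
have hv : forall v, v ^+ 2 <= S -> 0 <= 1 / 3 + e * v.
  move=> v hv.
  have -> : 1 / 3 + e * v = e * (1 + S + v).
    by rewrite -[1/3](@mulfK _ (3 * (1 + S))) -?mulrA ?ee; [|lra]; rewrite mul1r; rewrite /e; field; lra.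
  apply: mulr_ge0; first exact: ltW.
  nra.
have h0 := hv v0 ltac:(rewrite /S; nra).
have h1 := hv v1 ltac:(rewrite /S; nra).
have h2 := hv v2 ltac:(rewrite /S; nra).
have hs : 1/3 + e * v0 + (1/3 + e * v1) + (1/3 + e * v2) = 1.
  by rewrite /v0 /v1 /v2; field.
exists _, _, _, h0, h1, h2, hs; split.
  by rewrite /v0 /v1 /v2; field.
have -> : (1/3 + e * v0) ^+ 2 + (1/3 + e * v1) ^+ 2 + (1/3 + e * v2) ^+ 2
   = 1/3 + e ^+ 2 * S by rewrite /S /v0 /v1 /v2; field.
have : 0 < e ^+ 2 * S by apply: mulr_gt0 => //; exact: exprn_gt0.
lra.
Qed.

End Main.

Theorem mainTheorem18 (R : realType) :
  exists (E : env R) (ord : policy E -> policy E -> Prop),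
    total_preorder ord /\ in_Ord_RRL ord /\ ~ in_Ord_ONMR ord.
Proof.
exists (E0 R), (@ordQ R); split; [|split].
- split; first by move=> p; exact: lexx.
  split; first by move=> p q r; exact: le_trans.
  by move=> p q; rewrite /ordQ; case: (leP (Q (p tt)) (Q (q tt))) => h; [left|right; apply: ltW].
- exists (fun _ _ _ => 0), 1, (@Q R), 0; split; first by rewrite lexx ltr01.
  by move=> p1 p2; rewrite !J_RRLE lerN2.
- move=> [Rw [f [g [_ Hind]]]].
  have h3 : (0:R) <= 1/3 by rewrite divr_ge0 // ler0n.
  have hs3 : (1/3 + 1/3 + 1/3 : R) = 1 by field.
  pose u := @mk3 R _ _ _ h3 h3 h3 hs3.
  have [x0 [x1 [x2 [h0 [h1 [h2 [hs [HL HQ]]]]]]]] :=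
    exists_d (Rw tt (inord 0) tt) (Rw tt (inord 1) tt) (Rw tt (inord 2) tt).
  pose d := @mk3 R _ _ _ h0 h1 h2 hs.
  have := (Hind (fun _ => d) (fun _ => u)).2.
  rewrite (@ONMR_eq R Rw f g (fun _ => d) (fun _ => u)); last first.
    by rewrite !Lr_mk3 HL; field.
  move=> /(_ (lexx _)); rewrite /ordQ !Q_mk3.
  apply/negP; rewrite -ltNge.
  suff -> : (1/3)^+2 + (1/3)^+2 + (1/3)^+2 = 1/3 :> R by [].
  by field.
Qed.
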